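(* Let $m_1,m_2$ be positive integers, $r$ a real number with $0<|r|<1$, $d$ a positive integer, and ${\mathfrak p}(t)=(1+rt)^d$. Define $g:{\mathbb R}^2\to{\mathbb R}$ by $$g(t,k)=\begin{cases}2\,\dfrac{(\frac1{m_1}+\frac1{m_2})e^{-kt}-(\frac{e^k}{m_1}+\frac{e^{-k}}{m_2})}{e^k-e^{-k}}, & k\neq0,\\[2mm] \dfrac{1-t}{m_2}-\dfrac{1+t}{m_1}, & k=0.\end{cases}$$ Then there exists a unique $k_{m_1,m_2}\in{\mathbb R}$ such that $\int_{-1}^1 g(t,k_{m_1,m_2})\,{\mathfrak p}(t)\,dt=0$. *)

(* Defs.v *)
From Stdlib Require Import Reals.
Open Scope R_scope.

Definition gfun (m1 m2 t k : R) : R :=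
  if Req_EM_T k 0 then (1 - t) / m2 - (1 + t) / m1
  else 2 * (((1 / m1 + 1 / m2) * exp (- k * t) - (exp k / m1 + exp (- k) / m2))
            / (exp k - exp (- k))).

Definition pfun (r : R) (d : nat) (t : R) : R := (1 + r * t) ^ d.

(* Main.v *)
Require Import Defs.
From Stdlib Require Import Reals Lra Psatz.
From Coquelicot Require Import Coquelicot.
Open Scope R_scope.

Lemma exp_le (x y : R) : x <= y -> exp x <= exp y.
Proof. intros [H|H]; [left; now apply exp_increasing | subst; lra]. Qed.

Lemma exp_neq1 (x : R) : x <> 0 -> exp x <> 1.
Proof. intros H E. apply H. rewrite <- exp_0 in E. now apply exp_inv. Qed.

Lemma exp_conv (x s : R) : x <> 0 -> 0 < s < 1 -> exp (s*x) < s * exp x + (1 - s).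
Proof.
  intros Hx Hs.
  assert (H1 : exp x = exp (s*x) * exp ((1-s)*x)).
  { rewrite <- exp_plus. f_equal. ring. }
  assert (H2 : 1 = exp (s*x) * exp (-(s*x))).
  { rewrite <- exp_plus. replace (s*x + -(s*x)) with 0 by ring. now rewrite exp_0. }
  assert (A1 : 1 + (1-s)*x < exp ((1-s)*x)).
  { apply exp_ineq1. intro H. apply Rmult_integral in H as [H|H]; lra. }
  assert (A2 : 1 + -(s*x) < exp (-(s*x))).
  { apply exp_ineq1. intro H. assert (s*x = 0) by lra.
    apply Rmult_integral in H0 as [H0|H0]; lra. }
  pose proof (exp_pos (s*x)) as P.
  rewrite H1.
  assert (s * (exp (s*x) * (1 + (1-s)*x)) < s * (exp (s*x) * exp ((1-s)*x))).
  { apply Rmult_lt_compat_l; [lra|]. apply Rmult_lt_compat_l; lra. }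
  assert ((1-s) * (exp (s*x) * (1 + -(s*x))) < (1-s) * (exp (s*x) * exp (-(s*x)))).
  { apply Rmult_lt_compat_l; [lra|]. apply Rmult_lt_compat_l; lra. }
  rewrite <- H2 in H0. nra.
Qed.

Lemma exp_lip (K x y : R) : Rabs x <= K -> Rabs y <= K ->
  Rabs (exp x - exp y) <= exp K * Rabs (x - y).
Proof.
  assert (gen : forall x y, x <= y -> y <= K -> exp y - exp x <= exp K * (y - x)).
  { intros a b Hab HbK.
    assert (exp (-(b-a)) >= 1 - (b-a)) by (pose proof (exp_ineq1_le (-(b-a))); lra).
    assert (E : exp a = exp b * exp (-(b-a))).
    { rewrite <- exp_plus. f_equal. ring. }
    pose proof (exp_le _ _ HbK). pose proof (exp_pos b).
    rewrite E. nra. }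
  intros Hx Hy. pose proof (Rle_abs x); pose proof (Rle_abs (-x)); pose proof (Rle_abs y); pose proof (Rle_abs (-y)); rewrite Rabs_Ropp in *.

  destruct (Rle_dec x y).
  - rewrite (Rabs_minus_sym (exp x)), (Rabs_minus_sym x).
    pose proof (exp_le _ _ r).
    rewrite !Rabs_right by lra. apply gen; lra.
  - pose proof (exp_le y x).
    rewrite !Rabs_right by lra. apply gen; lra.
Qed.

Definition E (x : R) : R := if Req_EM_T x 0 then 1 else (exp x - 1) / x.

Lemma is_RInt_expaff (A C a b x y : R) : a <> 0 ->
  is_RInt (fun t => A + C * exp (a*t + b)) x y
    ((A*y + C*exp (a*y+b)/a) - (A*x + C*exp (a*x+b)/a)).
Proof.
  intros Ha.
  apply (is_RInt_derive (fun t => A*t + C*exp (a*t+b)/a)).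
  - intros t _. auto_derive; [easy|]. field. exact Ha.
  - intros t _. apply (ex_derive_continuous (K:=R_AbsRing) (V:=R_NormedModule)). auto_derive. easy.
Qed.

Lemma E_is_RInt (x : R) : is_RInt (fun s => exp (x*s)) 0 1 (E x).
Proof.
  unfold E; destruct (Req_EM_T x 0) as [->|Hx].
  - apply (is_RInt_ext (fun _ => 1)).
    + intros s _. rewrite Rmult_0_l, exp_0. reflexivity.
    + pose proof (@is_RInt_const R_CompleteNormedModule 0 1 1) as H.
      change (scal (1-0) 1) with ((1-0)*1) in H.
      replace ((1-0)*1) with 1 in H by ring. exact H.
  - pose proof (is_RInt_expaff 0 1 x 0 0 1 Hx) as H.
    replace ((exp x - 1)/x) with
      (0 * 1 + 1 * exp (x * 1 + 0) / x - (0 * 0 + 1 * exp (x * 0 + 0) / x)).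
    + revert H. apply is_RInt_ext. intros s _. simpl. rewrite Rplus_0_r. ring.
    + replace (x*0+0) with 0 by ring; replace (x*1+0) with x by ring. rewrite exp_0. field. exact Hx.
Qed.

Lemma Rabs_bnd (x K : R) : Rabs x <= K -> -K <= x <= K.
Proof. intros H. pose proof (Rle_abs x); pose proof (Rle_abs (-x)). rewrite Rabs_Ropp in *. lra. Qed.

Lemma RInt_cst (c : R) : RInt (fun _ => c) 0 1 = c.
Proof. rewrite RInt_const. change (scal (1-0) c) with ((1-0)*c). simpl. ring. Qed.

Lemma E_bounds (K x : R) : Rabs x <= K -> exp (-K) <= E x <= exp K.
Proof.
  intros Hx. apply Rabs_bnd in Hx.
  rewrite <- (is_RInt_unique _ _ _ _ (E_is_RInt x)).
  assert (ex : ex_RInt (fun s => exp (x*s)) 0 1) by (eexists; apply E_is_RInt).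
  assert (exc : forall c : R, @ex_RInt R_NormedModule (fun _ : R => c) 0 1) by (intros; apply ex_RInt_const).
  split.
  - rewrite <- (RInt_cst (exp (-K))) at 1. apply RInt_le; try lra; auto.
    intros s Hs. apply exp_le. nra.
  - rewrite <- (RInt_cst (exp K)). apply RInt_le; try lra; auto.
    intros s Hs. apply exp_le. nra.
Qed.

Lemma E_lip (K x y : R) : Rabs x <= K -> Rabs y <= K ->
  Rabs (E x - E y) <= exp K * Rabs (x - y).
Proof.
  intros Hx Hy.
  pose proof (is_RInt_minus _ _ _ _ _ _ (E_is_RInt x) (E_is_RInt y)) as H.
  apply (is_RInt_unique (V:=R_CompleteNormedModule)) in H. change (minus (E x) (E y)) with (E x - E y) in H.
  rewrite <- H.
  replace (exp K * Rabs (x - y)) with ((1 - 0) * (exp K * Rabs (x - y))) by ring.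
  apply abs_RInt_le_const; [lra| |].
  - apply ex_RInt_minus; eexists; apply E_is_RInt.
  - intros s Hs. change (minus (exp (x*s)) (exp (y*s))) with (exp (x*s) - exp (y*s)).
    apply Rabs_bnd in Hx; apply Rabs_bnd in Hy.
    eapply Rle_trans. apply exp_lip with (K := K).
    + apply Rabs_le. nra.
    + apply Rabs_le. nra.
    + apply Rmult_le_compat_l. left; apply exp_pos.
      replace (x*s - y*s) with ((x-y)*s) by ring. rewrite Rabs_mult.
      rewrite (Rabs_right s) by lra. pose proof (Rabs_pos (x-y)). nra.
Qed.

Lemma E_pos x : 0 < E x.
Proof. pose proof (E_bounds (Rabs x) x (Rle_refl _)). pose proof (exp_pos (- Rabs x)). lra. Qed.

Definition h (u s : R) : R := s * E (u*s) / E u.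

Lemma h0 s : h 0 s = s.
Proof. unfold h, E. rewrite Rmult_0_l. destruct (Req_EM_T 0 0); [|easy]. field. Qed.

Lemma h_closed u s : u <> 0 -> h u s = (exp (u*s) - 1) / (exp u - 1).
Proof.
  intros Hu. pose proof (exp_neq1 u Hu). assert (exp u - 1 <> 0) by lra.
  unfold h, E. destruct (Req_EM_T u 0); [easy|].
  destruct (Req_EM_T (u*s) 0) as [e|e].
  - rewrite e, exp_0. apply Rmult_integral in e as [e|e]; [easy|subst]. field; auto.
  - assert (s <> 0) by (intro; subst; apply e; ring). field. auto.
Qed.

Lemma h_sym u s : h u s = 1 - h (-u) (1-s).
Proof.
  destruct (Req_EM_T u 0) as [->|Hu].
  - rewrite Ropp_0, !h0. ring.
  - rewrite !h_closed; [|lra|auto].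
    replace (-u*(1-s)) with (-u + u*s) by ring. rewrite exp_plus, exp_Ropp.
    pose proof (exp_neq1 u Hu) as N1. pose proof (exp_pos u) as P.
    assert (exp u - 1 <> 0) by lra. assert (/exp u - 1 <> 0).
    { intro Q1. apply N1. assert (Q2 : / exp u = 1) by lra.
      rewrite <- (Rinv_inv (exp u)), Q2. apply Rinv_1. }
    field. split; lra.
Qed.

Lemma h_lt_s u s : 0 < u -> 0 < s < 1 -> h u s < s.
Proof.
  intros Hu Hs. rewrite h_closed by lra.
  pose proof (exp_conv u s ltac:(lra) Hs). rewrite Rmult_comm.
  pose proof (exp_increasing 0 u Hu). rewrite exp_0 in H0.
  apply (Rmult_lt_reg_r (exp u - 1)); [lra|]. unfold Rdiv. rewrite Rmult_assoc, Rinv_l by lra. lra.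
Qed.

Lemma h_gt_s u s : u < 0 -> 0 < s < 1 -> s < h u s.
Proof.
  intros Hu Hs. rewrite h_closed by lra.
  pose proof (exp_conv u s ltac:(lra) Hs). rewrite Rmult_comm.
  pose proof (exp_increasing u 0 Hu). rewrite exp_0 in H0.
  apply (Rmult_lt_reg_r (1 - exp u)); [lra|].
  replace ((exp (s*u) - 1) / (exp u - 1) * (1 - exp u)) with (1 - exp (s*u)) by (field; lra).
  lra.
Qed.

Lemma h_decr_pos u1 u2 s : 0 < u1 -> u1 < u2 -> 0 < s < 1 -> h u2 s < h u1 s.
Proof.
  intros H1 H12 Hs.
  rewrite !h_closed by lra.
  set (f := fun u => - ((exp (u*s) - 1) / (exp u - 1))).
  cut (f u1 < f u2). { unfold f. lra. }
  apply (incr_function f (Finite 0) p_infty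
    (fun u => (exp u * (exp (u*s) - 1) - s * exp (u*s) * (exp u - 1)) / (exp u - 1)^2)).
  - intros x Hx _. simpl in Hx. pose proof (exp_increasing 0 x Hx). rewrite exp_0 in H.
    unfold f. auto_derive. intro; lra. field. intro; lra.
  - intros x Hx _. simpl in Hx. pose proof (exp_increasing 0 x Hx). rewrite exp_0 in H.
    apply Rdiv_lt_0_compat; [|apply pow_lt; lra].
    pose proof (exp_conv (-x) s ltac:(lra) Hs).
    rewrite exp_Ropp in H0. replace (s * - x) with (-(x*s)) in H0 by ring.
    rewrite exp_Ropp in H0.
    set (X := exp x) in *. set (Y := exp (x*s)) in *.
    assert (0 < Y) by apply exp_pos.
    assert (Q : X * Y * / Y < X * Y * (s * / X + (1 - s))) by (apply Rmult_lt_compat_l; nra).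
    replace (X * Y * / Y) with X in Q by (field; lra).
    replace (X * Y * (s * / X + (1 - s))) with (s*Y + (1-s)*X*Y) in Q by (field; lra).
    nra.
  - simpl; lra.
  - exact H12.
  - easy.
Qed.

Lemma h_decr u1 u2 s : u1 < u2 -> 0 < s < 1 -> h u2 s < h u1 s.
Proof.
  intros H12 Hs.
  destruct (Rlt_le_dec 0 u1) as [P1|P1].
  - now apply h_decr_pos.
  - destruct (Rle_lt_dec u2 0) as [P2|P2].
    + destruct P2 as [P2|P2].
      * rewrite (h_sym u1), (h_sym u2).
        assert (h (-u1) (1-s) < h (-u2) (1-s)); [|lra].
        apply h_decr_pos; lra.
      * subst. rewrite h0. apply h_gt_s; lra.
    + destruct P1 as [P1|P1].
      * pose proof (h_lt_s u2 s P2 Hs). pose proof (h_gt_s u1 s P1 Hs). lra.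
      * subst. rewrite h0. now apply h_lt_s.
Qed.

Lemma h_lip K u v s : 0 <= s <= 1 -> Rabs u <= K -> Rabs v <= K ->
  Rabs (h u s - h v s) <= 2 * exp (4*K) * Rabs (u - v).
Proof.
  intros Hs Hu Hv.
  assert (Hus : Rabs (u*s) <= K).
  { rewrite Rabs_mult, (Rabs_right s) by lra. pose proof (Rabs_pos u). nra. }
  assert (Hvs : Rabs (v*s) <= K).
  { rewrite Rabs_mult, (Rabs_right s) by lra. pose proof (Rabs_pos v). nra. }
  pose proof (E_bounds _ _ Hus) as Ba1. pose proof (E_bounds _ _ Hvs) as Ba2.
  pose proof (E_bounds _ _ Hu) as Bb1. pose proof (E_bounds _ _ Hv) as Bb2.
  pose proof (E_lip _ _ _ Hus Hvs) as La.
  pose proof (E_lip _ _ _ Hv Hu) as Lb.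
  replace (u*s - v*s) with ((u-v)*s) in La by ring.
  rewrite Rabs_mult, (Rabs_right s) in La by lra.
  rewrite (Rabs_minus_sym v u) in Lb.
  replace (exp (4*K)) with (exp K * exp K * exp K * exp K)
    by (rewrite <- !exp_plus; f_equal; ring).
  rewrite exp_Ropp in Ba1, Ba2, Bb1, Bb2.
  set (X := exp K) in *. assert (PX : 0 < X) by apply exp_pos.
  set (L := Rabs (u - v)) in *. assert (PL : 0 <= L) by apply Rabs_pos.
  unfold h.
  set (a1 := E (u*s)) in *. set (a2 := E (v*s)) in *.
  set (b1 := E u) in *. set (b2 := E v) in *.
  assert (Pb1 : 0 < b1) by apply E_pos. assert (Pb2 : 0 < b2) by apply E_pos.
  assert (Pa2 : 0 < a2) by apply E_pos.
  set (N := (a1 - a2) * b2 + a2 * (b2 - b1)).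
  assert (EQ : s * a1 / b1 - s * a2 / b2 = s * N / (b1 * b2)) by (unfold N; field; lra).
  rewrite EQ.
  assert (HN : Rabs N <= 2 * X * X * L).
  { unfold N. eapply Rle_trans. apply Rabs_triang.
    rewrite !Rabs_mult, (Rabs_right b2), (Rabs_right a2) by lra.
    assert (Rabs (a1 - a2) * b2 <= (X * L) * X).
    { assert (X*(L*s) <= X*L) by (apply Rmult_le_compat_l; nra).
      apply Rmult_le_compat; try lra. apply Rabs_pos. }
    assert (a2 * Rabs (b2 - b1) <= X * (X * L)).
    { apply Rmult_le_compat; try lra. apply Rabs_pos. }
    lra. }
  unfold Rdiv. rewrite !Rabs_mult, (Rabs_right s) by lra.
  rewrite (Rabs_right (/ (b1*b2))) by (left; apply Rinv_0_lt_compat; nra).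
  assert (IX : / X * X = 1) by (field; lra).
  assert (/(b1 * b2) <= X * X).
  { assert (/ X * / X <= b1 * b2) by (apply Rmult_le_compat; try lra; left; apply Rinv_0_lt_compat; lra).
    rewrite <- (Rinv_inv (X*X)). apply Rinv_le_contravar.
    - apply Rinv_0_lt_compat; nra.
    - rewrite Rinv_mult. lra. }
  assert (0 <= / (b1*b2)) by (left; apply Rinv_0_lt_compat; nra).
  assert (s * Rabs N <= 2 * X * X * L) by (pose proof (Rabs_pos N); nra).
  assert (s * Rabs N * / (b1*b2) <= (2*X*X*L) * (X*X)).
  { apply Rmult_le_compat; try lra. pose proof (Rabs_pos N). nra. }
  nra.
Qed.

Lemma h_le_exp u s : 1 <= u -> 0 <= s <= 1 -> h u s <= 2 * exp (-(u*(1-s))).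
Proof.
  intros Hu Hs. rewrite h_closed by lra.
  replace (-(u*(1-s))) with (u*s + -u) by ring. rewrite exp_plus, exp_Ropp.
  assert (2 < exp u).
  { pose proof (exp_ineq1 1 ltac:(lra)). pose proof (exp_le _ _ Hu). lra. }
  set (X := exp u) in *. set (Y := exp (u*s)). assert (0 < Y) by apply exp_pos.
  assert (EQ : 2 * (Y * / X) - (Y - 1) / (X - 1) = (Y*(X-2) + X) / (X*(X-1))) by (field; lra).
  assert (0 <= (Y*(X-2) + X) / (X*(X-1))).
  { apply Rmult_le_pos. nra. left; apply Rinv_0_lt_compat; nra. }
  lra.
Qed.

Lemma gfun_eq m1 m2 t k : m1 <> 0 -> m2 <> 0 ->
  gfun m1 m2 t k = -2 * / m1 + 2 * (/m1 + /m2) * h (2*k) ((1-t)/2).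
Proof.
  intros H1 H2. unfold gfun. destruct (Req_EM_T k 0) as [->|Hk].
  - rewrite Rmult_0_r, h0. field. auto.
  - rewrite h_closed by lra.
    replace (2*k*((1-t)/2)) with (k + -k*t) by field.
    replace (2*k) with (k + k) by ring.
    rewrite !exp_plus, exp_Ropp.
    pose proof (exp_pos k) as P. pose proof (exp_neq1 k Hk) as N.
    assert (exp k * exp k - 1 <> 0).
    { intro Q. assert (Q2 : (exp k - 1) * (exp k + 1) = 0) by lra.
      apply Rmult_integral in Q2 as [Q2|Q2]; lra. }
    assert (exp k - / exp k <> 0).
    { intro Q. apply H. replace (exp k * exp k - 1) with (exp k * (exp k - / exp k)) by (field; lra).
      rewrite Q. ring. }
    field. repeat split; auto; lra.
Qed.

Lemma pfun_bounds r d t : Rabs r < 1 -> -1 <= t <= 1 ->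
  (1 - Rabs r)^d <= pfun r d t <= (1 + Rabs r)^d /\ 0 < pfun r d t.
Proof.
  intros Hr Ht. unfold pfun.
  assert (Rabs (r*t) <= Rabs r).
  { rewrite Rabs_mult. assert (Rabs t <= 1) by (apply Rabs_le; lra).
    pose proof (Rabs_pos r). pose proof (Rabs_pos t). nra. }
  apply Rabs_bnd in H.
  split; [split|]; try apply pow_incr; try split; try lra.
  apply pow_lt. lra.
Qed.

Definition GG m1 m2 r d k t := gfun m1 m2 t k * pfun r d t.
Definition FF m1 m2 r d k := RInt (GG m1 m2 r d k) (-1) 1.

Lemma GG_cont m1 m2 r d k t : m1 <> 0 -> m2 <> 0 -> continuous (GG m1 m2 r d k) t.
Proof.
  intros H1 H2. unfold GG, gfun, pfun.
  destruct (Req_EM_T k 0) as [_|Hk].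
  - apply (ex_derive_continuous (K:=R_AbsRing) (V:=R_NormedModule)). auto_derive; auto.
  - apply (ex_derive_continuous (K:=R_AbsRing) (V:=R_NormedModule)). auto_derive; auto.
Qed.

Lemma GG_ex m1 m2 r d k : m1 <> 0 -> m2 <> 0 -> ex_RInt (GG m1 m2 r d k) (-1) 1.
Proof. intros. apply (ex_RInt_continuous (V:=R_CompleteNormedModule)). intros. now apply GG_cont. Qed.

Lemma FF_decr m1 m2 r d k1 k2 : 0 < m1 -> 0 < m2 -> Rabs r < 1 -> k1 < k2 ->
  FF m1 m2 r d k2 < FF m1 m2 r d k1.
Proof.
  intros H1 H2 Hr Hk. unfold FF.
  apply RInt_lt; [lra| intros; apply GG_cont; lra | intros; apply GG_cont; lra |].
  intros t Ht. unfold GG. rewrite !gfun_eq by lra.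
  destruct (pfun_bounds r d t Hr ltac:(lra)) as [_ Pp].
  assert (h (2*k2) ((1-t)/2) < h (2*k1) ((1-t)/2)) by (apply h_decr; lra).
  assert (0 < /m1) by (apply Rinv_0_lt_compat; lra).
  assert (0 < /m2) by (apply Rinv_0_lt_compat; lra).
  apply Rmult_lt_compat_r; [lra|]. nra.
Qed.

Lemma FF_lip m1 m2 r d K k k' : 0 < m1 -> 0 < m2 -> Rabs r < 1 -> 0 <= K ->
  Rabs k <= K -> Rabs k' <= K ->
  Rabs (FF m1 m2 r d k - FF m1 m2 r d k') <=
    2 * (2 * (/m1 + /m2) * (2 * exp (4 * (2*K)) * (2 * Rabs (k - k'))) * (1 + Rabs r)^d).
Proof.
  intros H1 H2 Hr HK Hk Hk'. unfold FF.
  rewrite <- (RInt_minus (V:=R_CompleteNormedModule)) by (apply GG_ex; lra).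
  replace 2 with (1 - (-1)) at 1 by ring.
  apply abs_RInt_le_const; [lra| |].
  - apply (ex_RInt_minus (V:=R_NormedModule)); apply GG_ex; lra.
  - intros t Ht. change (minus (GG m1 m2 r d k t) (GG m1 m2 r d k' t))
      with (GG m1 m2 r d k t - GG m1 m2 r d k' t).
    unfold GG. rewrite !gfun_eq by lra.
    destruct (pfun_bounds r d t Hr Ht) as [[_ Pm] Pp].
    assert (0 < /m1) by (apply Rinv_0_lt_compat; lra).
    assert (0 < /m2) by (apply Rinv_0_lt_compat; lra).
    set (p := pfun r d t) in *. set (M := (1 + Rabs r)^d) in *.
    set (A := /m1) in *. set (B := /m2) in *.
    replace ((-2 * A + 2 * (A + B) * h (2 * k) ((1 - t) / 2)) * p -
       (-2 * A + 2 * (A + B) * h (2 * k') ((1 - t) / 2)) * p)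
      with ((2 * (A+B)) * (h (2 * k) ((1 - t) / 2) - h (2 * k') ((1 - t) / 2)) * p) by ring.
    rewrite !Rabs_mult, (Rabs_right 2), (Rabs_right (A+B)), (Rabs_right p) by lra.
    assert (Hl : Rabs (h (2 * k) ((1 - t) / 2) - h (2 * k') ((1 - t) / 2)) <=
              2 * exp (4 * (2*K)) * Rabs (2*k - 2*k')).
    { apply h_lip; [lra| |]; rewrite Rabs_mult, (Rabs_right 2) by lra; lra. }
    replace (2*k - 2*k') with (2*(k-k')) in Hl by ring.
    rewrite Rabs_mult, (Rabs_right 2) in Hl by lra.
    apply Rmult_le_compat; try lra.
    + apply Rmult_le_pos; [lra | apply Rabs_pos].
    + apply Rmult_le_compat_l; lra.
Qed.

Lemma FF_cont m1 m2 r d : 0 < m1 -> 0 < m2 -> Rabs r < 1 -> continuity (FF m1 m2 r d).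
Proof.
  intros H1 H2 Hr x. unfold continuity_pt, continue_in, limit1_in, limit_in.
  intros eps Heps.
  set (K := Rabs x + 1).
  set (L := 2 * (2 * (/m1 + /m2) * (2 * exp (4 * (2*K)) * 2) * (1 + Rabs r)^d)).
  assert (0 < /m1) by (apply Rinv_0_lt_compat; lra).
  assert (0 < /m2) by (apply Rinv_0_lt_compat; lra).
  assert (0 < (1 + Rabs r)^d) by (apply pow_lt; pose proof (Rabs_pos r); lra).
  assert (PL : 0 < L).
  { unfold L. pose proof (exp_pos (4*(2*K))). repeat apply Rmult_lt_0_compat; lra. }
  exists (Rmin 1 (eps / L)). split.
  - apply Rmin_pos; [lra|]. apply Rdiv_lt_0_compat; lra.
  - intros y [_ Hy]. simpl in Hy. unfold Rdist in *.
    assert (Hy1 : Rabs (y - x) < 1) by (pose proof (Rmin_l 1 (eps/L)); lra).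
    assert (Hy2 : Rabs (y - x) < eps / L) by (pose proof (Rmin_r 1 (eps/L)); lra).
    assert (Rabs y <= K).
    { unfold K. replace y with ((y - x) + x) by ring.
      pose proof (Rabs_triang (y-x) x). lra. }
    assert (Rabs x <= K) by (unfold K; lra).
    eapply Rle_lt_trans. apply (FF_lip m1 m2 r d K); auto.
    pose proof (Rabs_pos x); unfold K; lra.
    assert (HL : L * Rabs (y - x) < eps).
    { apply (Rmult_lt_compat_l L) in Hy2; [|lra].
      replace (L * (eps / L)) with eps in Hy2 by (field; lra). exact Hy2. }
    match goal with |- ?g < _ => replace g with (L * Rabs (y - x)) by (unfold L; ring) end.
    exact HL.
Qed.

Lemma FF_neg m1 m2 r d : 0 < m1 -> 0 < m2 -> Rabs r < 1 -> exists k, FF m1 m2 r d k < 0.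
Proof.
  intros H1 H2 Hr.
  assert (PA : 0 < /m1) by (apply Rinv_0_lt_compat; lra).
  assert (PB : 0 < /m2) by (apply Rinv_0_lt_compat; lra).
  set (A := /m1) in *. set (B := /m2) in *.
  set (m0 := (1 - Rabs r)^d). set (M := (1 + Rabs r)^d).
  assert (Pm0 : 0 < m0) by (apply pow_lt; lra).
  assert (PM : 0 < M) by (apply pow_lt; pose proof (Rabs_pos r); lra).
  set (k := (A+B)*M/(A*m0) + 1).
  assert (Hk : 1 <= k).
  { unfold k. assert (0 <= (A+B)*M/(A*m0)); [|lra].
    apply Rmult_le_pos; [nra|]. left; apply Rinv_0_lt_compat; nra. }
  assert (Hk2 : A*m0*k = (A+B)*M + A*m0) by (unfold k; field; nra).
  exists k.
  set (A0 := -2*A*m0). set (C := 4*(A+B)*M).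
  pose proof (is_RInt_expaff A0 C (-k) (-k) (-1) 1 ltac:(lra)) as HI.
  eapply Rle_lt_trans. unfold FF.
  apply (RInt_le _ (fun t => A0 + C * exp (-k*t + -k))); [lra | apply GG_ex; lra | eexists; exact HI |].
  - intros t Ht. unfold GG. rewrite gfun_eq by lra. fold A B.
    destruct (pfun_bounds r d t Hr ltac:(lra)) as [[Pm PM'] Pp].
    fold m0 M in Pm, PM'. set (p := pfun r d t) in *.
    assert (Hh : h (2*k) ((1-t)/2) <= 2 * exp (-(2*k*(1-(1-t)/2)))) by (apply h_le_exp; lra).
    replace (-(2*k*(1-(1-t)/2))) with (-k*t + -k) in Hh by field.
    set (hh := h (2*k) ((1-t)/2)) in *. set (ee := exp (-k*t + -k)) in *.
    assert (0 < ee) by apply exp_pos.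
    assert (Q1 : hh * p <= 2 * ee * M).
    { apply Rle_trans with (2*ee*p). apply Rmult_le_compat_r; lra.
      apply Rmult_le_compat_l; lra. }
    assert (Q2 : (A+B) * (hh * p) <= (A+B) * (2 * ee * M)) by (apply Rmult_le_compat_l; lra).
    assert (Q3 : A * m0 <= A * p) by (apply Rmult_le_compat_l; lra).
    unfold A0, C. lra.
  - rewrite (is_RInt_unique _ _ _ _ HI).
    replace (-k * -1 + -k) with 0 by ring. rewrite exp_0.
    assert (Pe : 0 < exp (-k*1 + -k)) by apply exp_pos.
    set (e := exp (-k*1 + -k)) in *.
    assert (e < 1).
    { unfold e. apply Rlt_le_trans with (exp 0); [apply exp_increasing; lra | rewrite exp_0; lra]. }
    assert (EQ : A0 * 1 + C * e / - k - (A0 * -1 + C * 1 / - k) = (2*A0*k + C*(1-e)) / k)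
      by (field; lra).
    rewrite EQ. assert (Ik : 0 < / k) by (apply Rinv_0_lt_compat; lra).
    assert (Nn : 2*A0*k + C*(1-e) < 0).
    { unfold A0, C. assert (0 < (A+B)*M*e) by (repeat apply Rmult_lt_0_compat; lra). nra. }
    unfold Rdiv. nra.
Qed.

Lemma FF_pos m1 m2 r d : 0 < m1 -> 0 < m2 -> Rabs r < 1 -> exists k, 0 < FF m1 m2 r d k.
Proof.
  intros H1 H2 Hr.
  assert (PA : 0 < /m1) by (apply Rinv_0_lt_compat; lra).
  assert (PB : 0 < /m2) by (apply Rinv_0_lt_compat; lra).
  set (A := /m1) in *. set (B := /m2) in *.
  set (m0 := (1 - Rabs r)^d). set (M := (1 + Rabs r)^d).
  assert (Pm0 : 0 < m0) by (apply pow_lt; lra).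
  assert (PM : 0 < M) by (apply pow_lt; pose proof (Rabs_pos r); lra).
  set (k := - ((A+B)*M/(B*m0) + 1)).
  assert (Hk : k <= -1).
  { unfold k. assert (0 <= (A+B)*M/(B*m0)); [|lra].
    apply Rmult_le_pos; [nra|]. left; apply Rinv_0_lt_compat; nra. }
  assert (Hk2 : B*m0*(-k) = (A+B)*M + B*m0) by (unfold k; field; nra).
  exists k.
  set (A0 := 2*B*m0). set (C := -(4*(A+B)*M)).
  pose proof (is_RInt_expaff A0 C (-k) k (-1) 1 ltac:(lra)) as HI.
  eapply Rlt_le_trans. 2:{ unfold FF.
  apply (RInt_le (fun t => A0 + C * exp (-k*t + k))); [lra | eexists; exact HI | apply GG_ex; lra |].
  intros t Ht. unfold GG. rewrite gfun_eq by lra. fold A B.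
    destruct (pfun_bounds r d t Hr ltac:(lra)) as [[Pm PM'] Pp].
    fold m0 M in Pm, PM'. set (p := pfun r d t) in *.
    rewrite h_sym.
    assert (Hh : h (-(2*k)) (1 - (1-t)/2) <= 2 * exp (-(-(2*k)*(1-(1 - (1-t)/2))))) by (apply h_le_exp; lra).
    replace (-(-(2*k)*(1-(1 - (1-t)/2)))) with (-k*t + k) in Hh by field.
    set (hh := h (-(2*k)) (1 - (1-t)/2)) in *. set (ee := exp (-k*t + k)) in *.
    assert (0 < ee) by apply exp_pos.
    assert (Q1 : hh * p <= 2 * ee * M).
    { apply Rle_trans with (2*ee*p). apply Rmult_le_compat_r; lra.
      apply Rmult_le_compat_l; lra. }
    assert (Q2 : (A+B) * (hh * p) <= (A+B) * (2 * ee * M)) by (apply Rmult_le_compat_l; lra).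
    assert (Q3 : B * m0 <= B * p) by (apply Rmult_le_compat_l; lra).
    unfold A0, C. lra. }
  - rewrite (is_RInt_unique _ _ _ _ HI).
    replace (-k * 1 + k) with 0 by ring. rewrite exp_0.
    assert (Pe : 0 < exp (-k*(-1) + k)) by apply exp_pos.
    set (e := exp (-k*(-1) + k)) in *.
    assert (e < 1).
    { unfold e. apply Rlt_le_trans with (exp 0); [apply exp_increasing; lra | rewrite exp_0; lra]. }
    assert (EQ : A0 * 1 + C * 1 / - k - (A0 * -1 + C * e / - k) = (2*A0*(-k) + C*(1-e)) / (-k))
      by (field; lra).
    rewrite EQ. assert (Ik : 0 < / (-k)) by (apply Rinv_0_lt_compat; lra).
    assert (Nn : 0 < 2*A0*(-k) + C*(1-e)).
    { unfold A0, C. assert (0 < (A+B)*M*e) by (repeat apply Rmult_lt_0_compat; lra). nra. }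
    unfold Rdiv. nra.
Qed.

Theorem lemmaA1 (m1 m2 : nat) (r : R) (d : nat)
  (hm1 : (0 < m1)%nat) (hm2 : (0 < m2)%nat)
  (hr0 : 0 < Rabs r) (hr1 : Rabs r < 1) (hd : (0 < d)%nat) :
  exists! k : R,
    exists pr : Riemann_integrable
                  (fun t => gfun (INR m1) (INR m2) t k * pfun r d t) (-1) 1,
      RiemannInt pr = 0.
Proof.
  pose proof (lt_0_INR _ hm1) as P1. pose proof (lt_0_INR _ hm2) as P2.
  set (F := FF (INR m1) (INR m2) r d).
  destruct (FF_pos _ _ r d P1 P2 hr1) as [k0 Hk0].
  destruct (FF_neg _ _ r d P1 P2 hr1) as [k1 Hk1].
  fold F in Hk0, Hk1.
  assert (Hlt : k0 < k1).
  { destruct (Rtotal_order k0 k1) as [H|[H|H]]; auto.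
    - subst; lra.
    - pose proof (FF_decr _ _ r d k1 k0 P1 P2 hr1 H). fold F in H0. lra. }
  assert (Hc : continuity (opp_fct F)) by (apply continuity_opp; apply FF_cont; lra).
  destruct (IVT (opp_fct F) k0 k1 Hc Hlt) as [z [_ Hz]].
  { unfold opp_fct; lra. } { unfold opp_fct; lra. }
  unfold opp_fct in Hz.
  assert (Int : forall k, Riemann_integrable
                  (fun t => gfun (INR m1) (INR m2) t k * pfun r d t) (-1) 1).
  { intros k. apply continuity_implies_RiemannInt; [lra|].
    intros x _. apply continuity_pt_filterlim. apply (GG_cont (INR m1) (INR m2) r d k x); lra. }
  exists z. split.
  - exists (Int z). rewrite <- RInt_Reals. change (F z = 0). lra.
  - intros k' [pr' Hpr']. rewrite <- RInt_Reals in Hpr'. change (F k' = 0) in Hpr'.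
    destruct (Rtotal_order z k') as [H|[H|H]]; auto.
    + pose proof (FF_decr _ _ r d z k' P1 P2 hr1 H). fold F in H0. lra.
    + pose proof (FF_decr _ _ r d k' z P1 P2 hr1 H). fold F in H0. lra.
Qed.
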